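(* There exist constants $c,C>0$ and infinitely many $n\in\mathbb{N}$ such that for each of them there is a connected graph $G$ on $n$ vertices of maximum degree $3$, vertices $a,b\in V(G)$, and a set $\mathcal{X}\subseteq V(G)$ with $|\mathcal{X}|\le C\sqrt{n}$ such that, in the geodesic-biased random walk on $G$ with target $b$ and excited set $\mathcal{X}$, started at $a$ (for any choice of the fixed shortest paths), \[\mathbb{E}[\tau_a(b,\mathcal{X})]\ \ge\ c\,\exp\left(\frac{\sqrt[4]{n}}{100}\right).\]
   Context: Geodesic-biased random walk: let $G$ be a finite connected graph, $b\in V(G)$ a target vertex and $\mathcal{X}\subseteq V(G)$ a set of excited vertices. For every vertex $x\neq b$ fix in advance one shortest path (geodesic) in $G$ from $x$ to $b$. A walker moves in discrete time: from an unexcited vertex ($x\notin\mathcal{X}$) she moves to a uniformly random neighbour of $x$; from an excited vertex ($x\in\mathcal{X}$) she moves deterministically to the next vertex on the fixed shortest path from $x$ to $b$. $\tau_a(b,\mathcal{X})$ denotes the first time the walker started at $a$ visits $b$. *)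

(* Defs.v *)
From mathcomp Require Import all_boot.
From Stdlib Require Import Reals.

Set Implicit Arguments.
Unset Strict Implicit.
Unset Printing Implicit Defensive.

Definition simple_graph (V : finType) (e : rel V) : Prop :=
  symmetric e /\ irreflexive e.

Definition connected_graph (V : finType) (e : rel V) : Prop :=
  forall x y : V, connect e x y.

Definition deg (V : finType) (e : rel V) (x : V) : nat := #|[pred y | e x y]|.

Definition max_degree_3 (V : finType) (e : rel V) : Prop :=
  (forall x, deg e x <= 3)%N /\ exists x, deg e x = 3%N.

Definition geodesic (V : finType) (e : rel V) (x b : V) (p : seq V) : Prop :=
  path e x p /\ last x p = b /\
  (forall q : seq V, path e x q -> last x q = b -> (size p <= size q)%N).

(* Choice of fixed shortest paths: g x is the fixed geodesic from x to b
   (listing the vertices after x), for every x <> b. *)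
Definition geodesic_choice (V : finType) (e : rel V) (b : V)
    (g : V -> seq V) : Prop :=
  forall x, x != b -> geodesic e x b (g x).

Definition next_on (V : finType) (g : V -> seq V) (x : V) : V := head x (g x).

Local Open Scope R_scope.

Definition trans (V : finType) (e : rel V) (X : {set V}) (g : V -> seq V)
    (x y : V) : R :=
  if x \in X then (if y == next_on g x then 1 else 0)
  else (if e x y then / INR (deg e x) else 0).

(* q t y = P(X_t = y and X_s <> b for all s <= t), walker started at a. *)
Fixpoint surv_mass (V : finType) (e : rel V) (X : {set V}) (g : V -> seq V)
    (a b : V) (t : nat) (y : V) : R :=
  match t with
  | O => if y == b then 0 else (if y == a then 1 else 0)
  | S t' => if y == b then 0 else
      \big[Rplus/0]_(x : V) (surv_mass e X g a b t' x * trans e X g x y)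
  end.

(* P(tau_a(b,X) > t) *)
Definition tail_prob (V : finType) (e : rel V) (X : {set V}) (g : V -> seq V)
    (a b : V) (t : nat) : R :=
  \big[Rplus/0]_(y : V) surv_mass e X g a b t y.

(* E[tau] = sum_{t >= 0} P(tau > t) (a value in [0, +oo]);
   "E[tau] >= K" means the supremum of the partial sums is >= K. *)
Definition expected_hit_ge (V : finType) (e : rel V) (X : {set V})
    (g : V -> seq V) (a b : V) (K : R) : Prop :=
  forall M : R, M < K ->
    exists T : nat, M < \big[Rplus/0]_(t < T) tail_prob e X g a b t.

(* Main.v *)
From HB Require Import structures.
Require Import Defs.
From mathcomp Require Import all_boot zify.
From Stdlib Require Import Reals Lra Classical.

Set Implicit Arguments.
Unset Strict Implicit.
Unset Printing Implicit Defensive.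


Local Open Scope R_scope.

Lemma Rplus_assoc' : associative Rplus.
Proof. move=> x y z; by rewrite Rplus_assoc. Qed.
HB.instance Definition _ := Monoid.isComLaw.Build R 0 Rplus Rplus_assoc' Rplus_comm Rplus_0_l.
HB.instance Definition _ := Monoid.isMulLaw.Build R 0 Rmult Rmult_0_l Rmult_0_r.
HB.instance Definition _ := Monoid.isAddLaw.Build R Rmult Rplus Rmult_plus_distr_r Rmult_plus_distr_l.

Lemma sumR_le (I : finType) (F G : I -> R) :
  (forall i, F i <= G i) -> \big[Rplus/0]_(i : I) F i <= \big[Rplus/0]_(i : I) G i.
Proof.
move=> H; apply: (big_ind2 (fun x y => x <= y)) => //; [lra| move=> *; lra].
Qed.

Lemma sumR_ge0 (I : finType) (F : I -> R) :
  (forall i, 0 <= F i) -> 0 <= \big[Rplus/0]_(i : I) F i.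
Proof. move=> H; apply: (big_ind (fun x => 0 <= x)) => //; [lra| move=> *; lra]. Qed.

Lemma Rinv_ge0 x : 0 <= x -> 0 <= / x.
Proof.
move=> H; case: (Rle_lt_or_eq_dec _ _ H) => [h|<-].
  by apply/Rlt_le/Rinv_0_lt_compat.
by rewrite Rinv_0; lra.
Qed.

Section Hit.
Variables (V : finType) (e : rel V) (X : {set V}) (g : V -> seq V) (a b : V).

Local Notation u := (surv_mass e X g a b).
Local Notation P := (trans e X g).

Lemma trans_ge0 x y : 0 <= P x y.
Proof.
rewrite /trans; case: (x \in X); first by case: (y == _); lra.
by case: (e x y); [apply: Rinv_ge0; apply: pos_INR | lra].
Qed.

Lemma surv_b t : u t b = 0.
Proof. by case: t => [|t] /=; rewrite eqxx. Qed.

Lemma surv_ge0 t y : 0 <= u t y.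
Proof.
elim: t y => [|t IH] y /=.
  by case: (y == b); [lra| case: (y == a); lra].
case: (y == b); first lra.
apply: sumR_ge0 => x; apply: Rmult_le_pos => //; exact: trans_ge0.
Qed.

Lemma surv_step (f : V -> R) t : f b = 0 ->
  \big[Rplus/0]_(y : V) (u t.+1 y * f y) =
  \big[Rplus/0]_(x : V) (u t x * \big[Rplus/0]_(y : V) (P x y * f y)).
Proof.
move=> fb.
rewrite (eq_bigr (fun y => \big[Rplus/0]_(x : V) (u t x * P x y * f y))); last first.
  move=> y _ /=; case: eqP => [->|_]; first by rewrite fb Rmult_0_r; apply/esym/big1 => x _; rewrite Rmult_0_r.
  by rewrite big_distrl.
rewrite exchange_big; apply: eq_bigr => x _; rewrite big_distrr; apply: eq_bigr => y _.
by rewrite Rmult_assoc.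
Qed.

Definition psum T := \big[Rplus/0]_(t < T) tail_prob e X g a b t.

Lemma phi_bound (f : V -> R) : a != b -> f b = 0 ->
  (forall x, x != b -> f x <= 1 + \big[Rplus/0]_(y : V) (P x y * f y)) ->
  forall T, f a <= psum T + \big[Rplus/0]_(y : V) (u T y * f y).
Proof.
move=> ab fb Hf; elim=> [|T IH].
  rewrite /psum big_ord0 Rplus_0_l.
  rewrite (bigD1 a) //= (negbTE ab) eqxx big1 ?Rplus_0_r ?Rmult_1_l; first exact: Rle_refl.
  move=> y /negbTE ya; rewrite ya; case: (y == b); apply: Rmult_0_l.
rewrite /psum big_ord_recr /= -/(psum T) surv_step // /tail_prob.
apply: (Rle_trans _ _ _ IH); rewrite Rplus_assoc; apply: Rplus_le_compat_l.
rewrite -big_split /=; apply: sumR_le => x.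
case: (eqVneq x b) => [->|xb]; first by rewrite surv_b !Rmult_0_l; lra.
have := Hf x xb; have := surv_ge0 T x; nra.
Qed.

Lemma hit_lower (f : V -> R) (F : R) : a != b -> f b = 0 -> 0 < F -> 0 < f a ->
  (forall x, f x <= F) ->
  (forall x, x != b -> f x <= 1 + \big[Rplus/0]_(y : V) (P x y * f y)) ->
  expected_hit_ge e X g a b (f a / 2).
Proof.
move=> ab fb F0 fa0 fF Hf M HM.
set eta := f a / (2 * F).
have eta0 : 0 < eta by rewrite /eta; apply: Rdiv_lt_0_compat; lra.
case: (classic (exists T, tail_prob e X g a b T <= eta)) => [[T HT]|Hno].
  exists T; have := phi_bound ab fb Hf T.
  have : \big[Rplus/0]_(y : V) (u T y * f y) <= F * tail_prob e X g a b T.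
    rewrite /tail_prob big_distrr; apply: sumR_le => y /=.
    rewrite (Rmult_comm F); apply: Rmult_le_compat_l; [exact: surv_ge0| exact: fF].
  have : F * tail_prob e X g a b T <= F * eta by apply: Rmult_le_compat_l; lra.
  have : F * eta = f a / 2 by rewrite /eta; field; lra.
  rewrite /psum; lra.
have Hall : forall t, eta < tail_prob e X g a b t.
  by move=> t; apply: Rnot_le_lt => H; apply: Hno; exists t.
have [T HT] := INR_archimed eta M eta0.
exists T; apply: (Rlt_le_trans _ _ _ HT).
elim: T {HT} => [|T IH]; first by rewrite /psum big_ord0 /=; lra.
rewrite /psum big_ord_recr S_INR -/(psum T) /=; have := Hall T; rewrite /psum; lra.
Qed.
End Hit.

Local Close Scope R_scope.


Section Lab.
Variables (R W : nat).

Definition adj0 (p q : nat * nat) : bool :=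
 let: (i,t) := p in let: (i',t') := q in
 [|| (i < R) && (i' == i) && (t' == t.+1) && (t' < W),
     (i.+1 < R) && (t == 0) && (t' == 0) && (i' == i.+1),
     (i.+1 < R) && (t == W.-1) && (t' == W.-1) && (i' == i.+1),
     (i == R) && (t == 0) && (i' == 0) && (t' == 0),
     (i == R) && (t == 0) && (i' == 0) && (t' == W.-1) |
     (i.+1 == R) && (t == 0) && (i' == R) && (t' == 1)].

Definition adj p q := adj0 p q || adj0 q p.

Definition valid (p : nat * nat) := ((p.1 < R) && (p.2 < W)) || ((p.1 == R) && (p.2 < 2)).

Definition nb (p : nat * nat) : seq (nat * nat) :=
 let: (i,t) := p in
 if i == R then (if t == 0 then [:: (0,0); (0,W.-1)] else [:: (R.-1, 0)])
 else
  (if t == 0 then [::] else [:: (i, t.-1)]) ++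
  (if t.+1 < W then [:: (i, t.+1)] else [::]) ++
  (if (t == 0) || (t == W.-1) then
      (if i == 0 then (R,0) else (i.-1, t)) ::
      (if i.+1 < R then [:: (i.+1, t)] else if t == 0 then [:: (R,1)] else [::])
   else [::]).

Hypothesis HR : 0 < R.
Hypothesis HW : 2 * R + 4 <= W.

Lemma adj_sym p q : adj p q = adj q p.
Proof. by rewrite /adj orbC. Qed.

Lemma H_row i t i' t' : i < R -> i' = i -> t' = t.+1 -> t' < W -> adj (i,t) (i',t').
Proof. move=> h1 h2 h3 h4; rewrite /adj; apply/orP; left; rewrite /adj0; apply/orP; left; lia. Qed.
Lemma H_route i t i' t' : t = 0 -> t' = 0 -> i' = i.+1 -> i' < R -> adj (i,t) (i',t').
Proof. move=> h1 h2 h3 h4; rewrite /adj; apply/orP; left; rewrite /adj0; do 1 (apply/orP; right); apply/orP; left; lia. Qed.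
Lemma H_slide i t i' t' : t = W.-1 -> t' = W.-1 -> i' = i.+1 -> i' < R -> adj (i,t) (i',t').
Proof. move=> h1 h2 h3 h4; rewrite /adj; apply/orP; left; rewrite /adj0; do 2 (apply/orP; right); apply/orP; left; lia. Qed.
Lemma H_r0r1 i t i' t' : i = R -> t = 0 -> i' = 0 -> t' = 0 -> adj (i,t) (i',t').
Proof. move=> h1 h2 h3 h4; rewrite /adj; apply/orP; left; rewrite /adj0; do 3 (apply/orP; right); apply/orP; left; lia. Qed.
Lemma H_r0s1 i t i' t' : i = R -> t = 0 -> i' = 0 -> t' = W.-1 -> adj (i,t) (i',t').
Proof. move=> h1 h2 h3 h4; rewrite /adj; apply/orP; left; rewrite /adj0; do 4 (apply/orP; right); apply/orP; left; lia. Qed.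
Lemma H_rB i t i' t' : i.+1 = R -> t = 0 -> i' = R -> t' = 1 -> adj (i,t) (i',t').
Proof. move=> h1 h2 h3 h4; rewrite /adj; apply/orP; left; rewrite /adj0; do 5 (apply/orP; right); lia. Qed.

Ltac split_bool := repeat match goal with
 | H : is_true (_ || _) |- _ => case/orP: H => H
 | H : is_true (_ && _) |- _ => let H1 := fresh "hb" in let H2 := fresh "hb" in case/andP: H => H1 H2
 end.

Ltac adj_solve :=
  first [ apply: H_row; lia | apply: H_route; lia | apply: H_slide; lia
        | apply: H_r0r1; lia | apply: H_r0s1; lia | apply: H_rB; lia ].

Lemma nb_spec p q : valid p -> valid q -> adj p q = (q \in nb p).
Proof.
case: p => i t; case: q => i' t'; rewrite /valid /nb /= => Hp Hq.
apply/idP/idP => H.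
  move: H; rewrite /adj /adj0 /= => H; split_bool;
  repeat case: ifP => ?; rewrite ?mem_cat ?inE ?xpair_eqE /=; lia.
move: H; repeat case: ifP => ?; rewrite ?mem_cat ?inE ?xpair_eqE /= => H;
  repeat (case/orP: H => H); (try by []);
  case/andP: H => /eqP -> /eqP ->; first [adj_solve | rewrite adj_sym; adj_solve].
Qed.


Lemma nb_valid p : valid p -> all valid (nb p).
Proof.
case: p => i t; rewrite /valid /nb /= => Hp.
repeat case: ifP => ?; rewrite /= ?andbT; lia.
Qed.

Lemma nb_uniq p : valid p -> uniq (nb p).
Proof.
case: p => i t; rewrite /valid /nb /= => Hp.
repeat case: ifP => ?; rewrite /= ?inE ?xpair_eqE ?andbT; lia.
Qed.

Lemma nb_size p : valid p -> size (nb p) <= 3.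
Proof.
case: p => i t; rewrite /valid /nb /= => Hp.
repeat case: ifP => ?; rewrite /=; lia.
Qed.

Lemma nb_size00 : size (nb (0,0)) = 3.
Proof.
rewrite /nb /=. have -> : (0 == R) = false by lia.
repeat case: ifP => ?; rewrite /=; lia.
Qed.

Lemma adj_irr p : adj p p = false.
Proof. case: p => i t; rewrite /adj /adj0 /=; lia. Qed.

Definition dl (p : nat * nat) : nat :=
  if p.1 == R then (if p.2 == 0 then R.+1 else 0) else minn (R - p.1 + p.2) (R.+2 + p.1).

Lemma dl_lip p q : valid p -> valid q -> adj p q -> dl p <= (dl q).+1.
Proof.
case: p => i t; case: q => i' t'; rewrite /valid /adj /adj0 /dl /= => Hp Hq H.
split_bool; repeat case: ifP => ?; lia.
Qed.
End Lab.


Section Ord.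
Variables (RR W : nat).
Hypothesis HR : 0 < RR.
Hypothesis HW : 2 * RR + 4 <= W.

Local Notation N := (RR * W).+1.
Definition dec (x : nat) : nat * nat := (x %/ W, x %% W).
Definition enc (p : nat * nat) : nat := p.1 * W + p.2.
Definition vv (p : nat * nat) : 'I_N.+1 := inord (enc p).
Definition eIc : rel 'I_N.+1 := fun x y => adj RR W (dec x) (dec y).

Lemma dec_valid (x : 'I_N.+1) : valid RR W (dec x).
Proof.
rewrite /valid /dec /=.
have Hx := ltn_ord x. have W0 : 0 < W by lia.
have E := divn_eq x W. have Hr := ltn_pmod x W0.
move: E Hr Hx; set q := x %/ W; set r := x %% W => E Hr Hx.
case: (ltnP q RR) => Hq; first by rewrite Hr.
have : RR * W <= q * W by rewrite leq_mul2r Hq orbT.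
case: (ltnP RR q) => Hq2.
  have : RR.+1 * W <= q * W by rewrite leq_mul2r Hq2 orbT.
  rewrite mulSn; lia.
have -> : q = RR by lia.
rewrite eqxx /=; move: E; rewrite (_ : q = RR) //; lia.
Qed.

Lemma enc_dec (x : nat) : enc (dec x) = x.
Proof. by rewrite /enc /dec /= -divn_eq. Qed.

Lemma dec_enc p : valid RR W p -> dec (enc p) = p.
Proof.
case: p => i t; rewrite /valid /dec /enc /= => H.
have W0 : 0 < W by lia.
have Ht : t < W by lia.
by rewrite divnMDl // divn_small // addn0 modnMDl modn_small.
Qed.

Lemma enc_lt p : valid RR W p -> enc p < N.+1.
Proof.
case: p => i t; rewrite /valid /enc /= => /orP [/andP [Hi Ht]|/andP [/eqP -> Ht]]; last lia.
have : i * W <= RR.-1 * W by rewrite leq_mul2r; apply/orP; right; lia.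
have : RR.-1 * W + W = RR * W by case: (RR) HR => // r _; rewrite mulSn addnC.
lia.
Qed.

Lemma val_vv p : valid RR W p -> nat_of_ord (vv p) = enc p.
Proof. by move=> H; rewrite /vv inordK // enc_lt. Qed.

Lemma dec_vv p : valid RR W p -> dec (vv p) = p.
Proof. by move=> H; rewrite val_vv // dec_enc. Qed.

Lemma vv_dec (x : 'I_N.+1) : vv (dec x) = x.
Proof. by apply: ord_inj; rewrite val_vv ?dec_valid // enc_dec. Qed.

Lemma vv_inj p q : valid RR W p -> valid RR W q -> vv p = vv q -> p = q.
Proof. by move=> Hp Hq E; rewrite -(dec_vv Hp) -(dec_vv Hq) E. Qed.

Lemma eI_vv p q : valid RR W p -> valid RR W q -> eIc (vv p) (vv q) = adj RR W p q.
Proof. by move=> Hp Hq; rewrite /eIc !dec_vv. Qed.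

Lemma eI_mem (x y : 'I_N.+1) : eIc x y = (y \in map vv (nb RR W (dec x))).
Proof.
rewrite /eIc nb_spec ?dec_valid //.
have Hall := nb_valid HR HW (dec_valid x).
apply/idP/idP => [H|/mapP [q Hq ->]].
  by rewrite -(vv_dec y); apply: map_f.
by rewrite dec_vv //; move/allP: Hall; apply.
Qed.

Lemma map_nb_uniq (x : 'I_N.+1) : uniq (map vv (nb RR W (dec x))).
Proof.
have Hall := nb_valid HR HW (dec_valid x).
rewrite map_inj_in_uniq ?nb_uniq ?dec_valid //.
move=> p q Hp Hq; apply: vv_inj; by move/allP: Hall; apply.
Qed.

Lemma deg_eq (x : 'I_N.+1) : deg eIc x = size (nb RR W (dec x)).
Proof.
rewrite /deg -(size_map vv); rewrite -(card_uniqP (map_nb_uniq x)).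
by apply: eq_card => y; rewrite inE eI_mem.
Qed.

Local Open Scope R_scope.

Lemma sum_nb (x : 'I_N.+1) c (F : 'I_N.+1 -> R) :
  \big[Rplus/0]_(y : 'I_N.+1) ((if eIc x y then c else 0) * F y) =
  \big[Rplus/0]_(q <- nb RR W (dec x)) (c * F (vv q)).
Proof.
rewrite (eq_bigr (fun y => if y \in map vv (nb RR W (dec x)) then c * F y else 0)); last first.
  by move=> y _; rewrite eI_mem; case: ifP => _; lra.
rewrite -big_mkcond /= -big_uniq ?map_nb_uniq //= big_map //.
Qed.

Lemma sum_pt (z : 'I_N.+1) (F : 'I_N.+1 -> R) :
  \big[Rplus/0]_(y : 'I_N.+1) ((if y == z then 1 else 0) * F y) = F z.
Proof.
rewrite (bigD1 z) //= eqxx big1 ?Rplus_0_r ?Rmult_1_l //.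
by move=> y /negbTE ->; rewrite Rmult_0_l.
Qed.

End Ord.


Section Graph.
Variables (RR W : nat).
Hypothesis HR : 0 < RR.
Hypothesis HW : 2 * RR + 4 <= W.

Local Notation N := (RR * W).+1.
Local Notation vv := (@vv RR W).
Local Notation eIc := (@eIc RR W).
Local Notation valid := (valid RR W).

Definition XX : {set 'I_N.+1} := [set x : 'I_N.+1 | (dec W x).2 == W.-1].
Definition aa : 'I_N.+1 := vv (RR, 0).
Definition bb : 'I_N.+1 := vv (RR, 1).
Definition dI (x : 'I_N.+1) := dl RR (dec W x).

Lemma vR0 : valid (RR, 0). Proof. rewrite /valid /=; lia. Qed.
Lemma vR1 : valid (RR, 1). Proof. rewrite /valid /=; lia. Qed.
Lemma vC i t : i < RR -> t < W -> valid (i, t). Proof. rewrite /valid /=; lia. Qed.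

Lemma eIv p q : valid p -> valid q -> adj RR W p q -> eIc (vv p) (vv q).
Proof. by move=> Hp Hq H; rewrite eI_vv. Qed.

Lemma eI_simple : simple_graph eIc.
Proof.
split; first by move=> x y; rewrite /eIc adj_sym.
by move=> x; rewrite /eIc adj_irr.
Qed.

Lemma conn_row i t : i < RR -> t < W -> connect eIc (vv (i, t)) (vv (i, 0)).
Proof.
move=> Hi; elim: t => [|t IH] Ht; first exact: connect0.
apply: connect_trans (IH _); last lia.
apply: connect1; apply: eIv; try apply: vC; try lia.
rewrite adj_sym; apply: H_row; lia.
Qed.

Lemma conn_route i : i < RR -> connect eIc (vv (i, 0)) aa.
Proof.
elim: i => [|i IH] Hi.
  apply: connect1; apply: eIv; [apply: vC; lia | exact: vR0 |].
  rewrite adj_sym; apply: H_r0r1; lia.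
apply: connect_trans (IH _); last lia.
apply: connect1; apply: eIv; try (apply: vC; lia).
rewrite adj_sym; apply: H_route; lia.
Qed.

Lemma conn_aa (x : 'I_N.+1) : connect eIc x aa.
Proof.
rewrite -(vv_dec HR HW x); have := dec_valid HR HW x.
case: (dec W x) => i t; rewrite /valid /= => /orP [/andP [Hi Ht]|/andP [/eqP -> Ht]].
  exact: connect_trans (conn_row Hi Ht) (conn_route Hi).
case: t Ht => [|[|t]] Ht; [exact: connect0| |lia].
apply: connect_trans (conn_route (_ : RR.-1 < RR)); last lia.
apply: connect1; apply: eIv; [exact: vR1 | apply: vC; lia |].
rewrite adj_sym; apply: H_rB; lia.
Qed.

Lemma eI_connected : connected_graph eIc.
Proof.
move=> x y; apply: connect_trans (conn_aa x) _.
rewrite (sym_connect_sym (e := eIc)); first exact: conn_aa.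
by move=> u w; rewrite /eIc adj_sym.
Qed.

Lemma eI_deg3 : max_degree_3 eIc.
Proof.
split.
  move=> x; rewrite deg_eq //; apply: nb_size => //; exact: dec_valid.
exists (vv (0, 0)); rewrite deg_eq // dec_vv //; [exact: nb_size00 | apply: vC; lia].
Qed.

Lemma card_XX : #|XX| <= RR.
Proof.
apply: leq_trans (_ : #|[set vv (nat_of_ord i, W.-1) | i : 'I_RR]| <= RR).
  apply: subset_leq_card; apply/subsetP => x; rewrite inE => /eqP Ht.
  have Hv := dec_valid HR HW x; rewrite -(vv_dec HR HW x).
  move: Hv Ht; case: (dec W x) => i t /= Hv Ht.
  have Hi : i < RR by move: Hv; rewrite /valid /=; lia.
  rewrite Ht.
  by apply/imsetP; exists (Ordinal Hi).
by apply: leq_trans (leq_imset_card _ _) _; rewrite card_ord.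
Qed.

Lemma dI_lower (p : seq 'I_N.+1) (y : 'I_N.+1) : path eIc y p -> last y p = bb -> dI y <= size p.
Proof.
elim: p y => [|z p IH] y /=.
  by move=> _ ->; rewrite /dI /bb dec_vv ?vR1 // /dl /=; rewrite eqxx.
case/andP => Hyz Hp Hl; have := IH z Hp Hl.
have := dl_lip HR HW (dec_valid HR HW y) (dec_valid HR HW z) Hyz.
rewrite /dI; lia.
Qed.

Lemma route_path m : m < RR -> exists q : seq 'I_N.+1,
  [/\ path eIc (vv (RR.-1 - m, 0)) q, last (vv (RR.-1 - m, 0)) q = bb & size q = m.+1].
Proof.
elim: m => [|m IH] Hm.
  exists [:: bb]; split => //=; rewrite andbT; apply: eIv; [apply: vC; lia| exact: vR1|].
  apply: H_rB; lia.
have [q [H1 H2 H3]] := IH (ltnW Hm).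
exists (vv (RR.-1 - m, 0) :: q); split => /=; [|by []|by rewrite H3].
rewrite H1 andbT; apply: eIv; try (apply: vC; lia).
apply: H_route; lia.
Qed.

Lemma aa_path : exists q : seq 'I_N.+1, [/\ path eIc aa q, last aa q = bb & size q = RR.+1].
Proof.
have Hlt : RR.-1 < RR by lia.
have [q [H1 H2 H3]] := route_path Hlt.
have E : RR.-1 - RR.-1 = 0 by lia.
rewrite E in H1 H2.
exists (vv (0, 0) :: q); split => /=; [|by []|by rewrite H3; lia].
rewrite H1 andbT; apply: eIv; [exact: vR0| apply: vC; lia|].
apply: H_r0r1; lia.
Qed.

Lemma slide_path i : i < RR -> exists q : seq 'I_N.+1,
  [/\ path eIc (vv (i, W.-1)) q, last (vv (i, W.-1)) q = bb & size q = i + RR + 2].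
Proof.
elim: i => [|i IH] Hi.
  have [q [H1 H2 H3]] := aa_path.
  exists (aa :: q); split => /=; [|by []|by rewrite H3; lia].
  rewrite H1 andbT; apply: eIv; [apply: vC; lia| exact: vR0|].
  rewrite adj_sym; apply: H_r0s1; lia.
have [q [H1 H2 H3]] := IH (ltnW Hi).
exists (vv (i, W.-1) :: q); split => /=; [|by []|by rewrite H3; lia].
rewrite H1 andbT; apply: eIv; try (apply: vC; lia).
rewrite adj_sym; apply: H_slide; lia.
Qed.

Definition prevs (i : nat) : nat * nat := if i == 0 then (RR, 0) else (i.-1, W.-1).

Lemma next_slide (g : 'I_N.+1 -> seq 'I_N.+1) i : geodesic_choice eIc bb g -> i < RR ->
  next_on g (vv (i, W.-1)) = vv (prevs i).
Proof.
move=> Hg Hi.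
have Hv : valid (i, W.-1) by apply: vC; lia.
have Hxb : vv (i, W.-1) != bb.
  apply/eqP => /(vv_inj HR HW Hv vR1) [E _]; lia.
have [Hp [Hl Hmin]] := Hg _ Hxb.
have [q [Q1 Q2 Q3]] := slide_path Hi.
have Hs := Hmin q Q1 Q2; rewrite Q3 in Hs.
move: Hp Hl Hs; rewrite /next_on; case: (g _) => [|y p] /=.
  by move=> _ E; rewrite E eqxx in Hxb.
case/andP => Hxy Hp Hl Hs.
have Hd := dI_lower Hp Hl.
move: Hxy; rewrite eI_mem // dec_vv // => /mapP [r Hr Er].
rewrite Er; congr vv.
have Hrv : valid r by move/allP: (nb_valid HR HW Hv); apply.
move: Hd; rewrite Er /dI dec_vv //; clear Er Hp Hl.
move: Hr; rewrite /nb /prevs /=.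
have -> : (i == RR) = false by lia.
have -> : (W.-1 == 0) = false by lia.
have -> : (W.-1.+1 < W) = false by lia.
rewrite eqxx orbT /=.
case: r Hrv => i' t' Hrv; rewrite /dl /=.
repeat case: ifP => ?; rewrite ?inE ?mem_cat ?xpair_eqE ?orbF /= => H;
  repeat (case/orP: H => H); try (case/andP: H => /eqP E1 /eqP E2; subst; try lia; done);
  lia.
Qed.

End Graph.


Section Real.
Variables (RR W : nat) (lam : R).
Hypothesis HR : (0 < RR)%nat.
Hypothesis HW : (2 * RR + 4 <= W)%nat.
Hypothesis Hl1 : (1 < lam)%R.
Hypothesis Hl2 : (lam <= 2)%R.
Hypothesis Hlam : ((lam - 1)^2 * INR W.-1 <= 1)%R.

Local Notation N := (RR * W).+1.
Local Notation vv := (@vv RR W).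
Local Notation eIc := (@eIc RR W).
Local Notation valid := (valid RR W).
Local Open Scope R_scope.

Let L := lam ^ RR.+1.
Let w := INR W.-1.

Definition fl (p : nat * nat) : R :=
  if p.1 == RR then (if p.2 == 0%nat then L - 1 else 0)
  else L - lam ^ p.1.+1 * (1 - INR p.2 / w).

Definition fI (x : 'I_N.+1) := fl (dec W x).

Lemma w_pos : 0 < w.
Proof. rewrite /w; apply: lt_0_INR; apply/ltP; lia. Qed.

Lemma fl_mid i t : (i < RR)%nat -> fl (i, t) = L - lam ^ i.+1 * (1 - INR t / w).
Proof. by move=> Hi; rewrite /fl /=; have -> : (i == RR) = false by lia. Qed.

Lemma fl_slide i : (i < RR)%nat -> fl (i, W.-1) = L.
Proof. move=> Hi; rewrite fl_mid //; rewrite /Rdiv -/w Rinv_r; [ring| have := w_pos; lra]. Qed.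

Lemma fl_route i : (i < RR)%nat -> fl (i, 0%nat) = L - lam ^ i.+1.
Proof. move=> Hi; rewrite fl_mid //=; rewrite /Rdiv Rmult_0_l; ring. Qed.

Lemma fl_aa : fl (RR, 0%nat) = L - 1.
Proof. by rewrite /fl /= eqxx. Qed.

Lemma fl_bb : fl (RR, 1%nat) = 0.
Proof. by rewrite /fl /= eqxx. Qed.

Lemma L_gt1 : 1 < L.
Proof. rewrite /L; apply: Rlt_pow_R1 => //; lia. Qed.

Lemma lam_pow_ge0 n : 0 <= lam ^ n.
Proof. apply: pow_le; lra. Qed.

Lemma fl_le p : valid p -> fl p <= L.
Proof.
case: p => i t; rewrite /valid /= => /orP [/andP [Hi Ht]|/andP [/eqP -> Ht]].
  rewrite fl_mid //.
  have : INR t <= w by rewrite /w; apply: le_INR; apply/leP; lia.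
  have := w_pos; have := lam_pow_ge0 i.+1 => h1 h2 h3.
  have : 0 <= 1 - INR t / w.
    have : INR t / w <= 1 by apply: (Rmult_le_reg_r w) => //; rewrite /Rdiv Rmult_assoc Rinv_l; lra.
    lra.
  move=> h4; have := Rmult_le_pos _ _ h1 h4; lra.
case: t Ht => [|[|t]] Ht; [rewrite fl_aa; lra| rewrite fl_bb; have := L_gt1; lra| lia].
Qed.

Lemma sum_unexc g (x : 'I_N.+1) : x \notin XX RR W ->
  \big[Rplus/0]_(y : 'I_N.+1) (trans eIc (XX RR W) g x y * fI y) =
  \big[Rplus/0]_(q <- nb RR W (dec W x)) (/ INR (size (nb RR W (dec W x))) * fl q).
Proof.
move=> Hx; rewrite /trans (negbTE Hx).
rewrite sum_nb // deg_eq // big_seq [in RHS]big_seq; apply: eq_bigr => q Hq.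
have Hall := nb_valid HR HW (dec_valid HR HW x).
by rewrite /fI dec_vv //; move/allP: Hall; apply.
Qed.

Lemma sum_exc g (x : 'I_N.+1) : x \in XX RR W ->
  \big[Rplus/0]_(y : 'I_N.+1) (trans eIc (XX RR W) g x y * fI y) = fI (next_on g x).
Proof. by move=> Hx; rewrite /trans Hx sum_pt. Qed.


Lemma route_ineq i : L - lam ^ i.+1 <=
  1 + (/ 3 * (L - lam ^ i.+1 * (1 - 1 / w)) + (/ 3 * (L - lam ^ i) + (/ 3 * (L - lam ^ i.+2) + 0))).
Proof.
have z0 := lam_pow_ge0 i; set z := lam ^ i in z0 *.
have -> : lam ^ i.+1 = z * lam by rewrite /= Rmult_comm.
have -> : lam ^ i.+2 = z * lam * lam by rewrite /z /=; ring.
have w0 := w_pos.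
have Hlw : (lam - 1)^2 * w <= 1 by exact: Hlam.
have h : (lam - 1)^2 <= lam * / w.
  apply: (Rmult_le_reg_r w) => //; rewrite Rmult_assoc Rinv_l; [|lra]; lra.
have h2 : z * ((lam - 1)^2 - lam * / w) <= 0.
  have : (lam - 1)^2 - lam * / w <= 0 by lra.
  move=> h3; have := Rmult_le_compat_l z _ _ z0 h3; lra.
have h3 : z * lam * lam + z - 2 * (z * lam) - z * lam * / w <= 0 by move: h2; rewrite /=; nra.
rewrite /Rdiv; lra.
Qed.

Lemma mid_ineq i t : (0 < t)%nat -> L - lam ^ i * (1 - INR t / w) <=
  1 + (/ 2 * (L - lam ^ i * (1 - INR t.-1 / w)) + (/ 2 * (L - lam ^ i * (1 - INR t.+1 / w)) + 0)).
Proof.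
move=> Ht; rewrite S_INR.
have -> : INR t.-1 = INR t - 1 by rewrite -{2}(prednK Ht) S_INR; ring.
rewrite /Rdiv; lra.
Qed.

Lemma aa_ineq : L - 1 <= 1 + (/ 2 * (L - lam ^ 1) + (/ 2 * L + 0)).
Proof. rewrite /= Rmult_1_r; lra. Qed.

Lemma cond g : geodesic_choice eIc (bb RR W) g -> forall x : 'I_N.+1, x != bb RR W ->
  fI x <= 1 + \big[Rplus/0]_(y : 'I_N.+1) (trans eIc (XX RR W) g x y * fI y).
Proof.
move=> Hg x Hxb.
have Hv := dec_valid HR HW x.
have Ex := vv_dec HR HW x.
have HX : (x \in XX RR W) = ((dec W x).2 == W.-1) by rewrite inE.
rewrite {1}/fI.
move: Hv Ex HX; case: (dec W x) => i t Hv Ex HX.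
move: (Hv); rewrite /valid /= => /orP [/andP [Hi Ht]|/andP [/eqP Hi Ht]].
  case: (eqVneq t W.-1) => [Et|Nt].
    subst t; rewrite sum_exc; last by rewrite HX /= eqxx.
    have Hpv : valid (prevs RR W i) by rewrite /prevs; case: ifP => _; [exact: vR0| apply: vC; lia].
    rewrite -Ex next_slide // /fI dec_vv //.
    rewrite fl_slide // /prevs; case: ifP => _; [rewrite fl_aa; lra| rewrite fl_slide; [lra|lia]].
  rewrite sum_unexc; last by rewrite HX /=; apply/negP => /eqP; lia.
  rewrite -Ex dec_vv // /nb /=.
  have -> : (i == RR) = false by lia.
  have -> : (t == W.-1) = false by apply/negP => /eqP; lia.
  rewrite orbF.
  case: (eqVneq t 0%nat) => [Et|Nt0].
    subst t; rewrite /=.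
    have -> : (1 < W)%nat = true by lia.
    have H1 : fl (i, 1%nat) = L - lam ^ i.+1 * (1 - 1 / w) by rewrite fl_mid.
    have HI := route_ineq i.
    rewrite fl_route //.
    case: ifP => /eqP Hi0; case: ifP => Hi1; rewrite /= !big_cons big_nil /= H1.
    - subst i; rewrite fl_aa fl_route //; move: HI; rewrite /=; lra.
    - subst i; rewrite fl_aa fl_bb; have E : RR = 1%nat by lia.
      move: HI; rewrite /L E /=; lra.
    - rewrite fl_route; last lia. rewrite fl_route //.
      rewrite (prednK (_ : (0 < i)%nat)); last lia. move: HI; rewrite /=; lra.
    - rewrite fl_route; last lia. rewrite fl_bb (prednK (_ : (0 < i)%nat)); last lia.
      have E : RR = i.+1 by lia. move: HI; rewrite /L E /=; lra.
  have -> : (t.+1 < W)%nat = true by lia.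
  rewrite /= !big_cons big_nil !fl_mid //.
  have Ht0 : (0 < t)%nat by lia.
  have := mid_ineq i.+1 Ht0.
  rewrite /Rdiv /=; lra.
subst i; case: t Ht Hv Ex HX => [|[|t]] Ht Hv Ex HX; last lia.
  rewrite sum_unexc; last by rewrite HX /=; apply/negP => /eqP; lia.
  rewrite -Ex dec_vv // /nb /= eqxx /= !big_cons big_nil fl_aa fl_route; last lia.
  rewrite fl_slide; last lia.
  have := aa_ineq; rewrite /Rdiv /=; lra.
by rewrite -Ex eqxx in Hxb.
Qed.

Lemma main_graph g : geodesic_choice eIc (bb RR W) g ->
  expected_hit_ge eIc (XX RR W) g (aa RR W) (bb RR W) ((L - 1) / 2).
Proof.
move=> Hg.
have fa : fI (aa RR W) = L - 1 by rewrite /fI /aa dec_vv ?fl_aa //; exact: vR0.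
rewrite -fa; apply: (@hit_lower _ eIc (XX RR W) g (aa RR W) (bb RR W) fI L).
- apply/eqP => /(vv_inj HR HW (vR0 HR HW) (vR1 HR HW)) [] H; lia.
- by rewrite /fI /bb dec_vv ?fl_bb //; exact: vR1.
- have := L_gt1; lra.
- rewrite fa; have := L_gt1; lra.
- move=> x; apply: fl_le; exact: dec_valid.
- exact: cond.
Qed.
End Real.


Local Open Scope R_scope.

Lemma hit_mono (V : finType) (e : rel V) X g a b K1 K2 :
  K2 <= K1 -> expected_hit_ge e X g a b K1 -> expected_hit_ge e X g a b K2.
Proof. move=> HK H M HM; apply: H; lra. Qed.

Lemma exp_le x y : x <= y -> exp x <= exp y.
Proof.
move=> H; case: (Rle_lt_or_eq_dec _ _ H) => [h|->]; last exact: Rle_refl.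
exact/Rlt_le/exp_increasing.
Qed.

Lemma bern x n : 0 <= x -> 1 + INR n * x <= (1 + x) ^ n.
Proof.
move=> Hx; elim: n => [|n IH]; first by rewrite /=; lra.
rewrite S_INR; change ((1 + x) ^ n.+1) with ((1 + x) * (1 + x) ^ n).
have := pos_INR n; nra.
Qed.

Lemma INR_nat_e (a b : nat) : INR (a * b)%nat = INR a * INR b.
Proof. by rewrite -multE mult_INR. Qed.
Lemma INR_nat_p (a b : nat) : INR (a + b)%nat = INR a + INR b.
Proof. by rewrite -plusE plus_INR. Qed.

Lemma final_aux :
  exists c C : R, (0 < c)%R /\ (0 < C)%R /\
  forall N : nat, exists n : nat, (N <= n)%nat /\
    exists (e : rel 'I_n) (a b : 'I_n) (X : {set 'I_n}),
      simple_graph e /\ connected_graph e /\ max_degree_3 e /\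
      (INR #|X| <= C * sqrt (INR n))%R /\
      forall g : 'I_n -> seq 'I_n, geodesic_choice e b g ->
        expected_hit_ge e X g a b (c * exp (sqrt (sqrt (INR n)) / 100))%R.
Proof.
exists (/ 4), 1; split; [lra|split; [lra|]].
move=> N; set k := N.+1.
set RR := (4 * k * k).-1; set W := (8 * k * k + 2)%nat.
have HR : (0 < RR)%nat by rewrite /RR /k; nia.
have HW : (2 * RR + 4 <= W)%nat by rewrite /RR /W /k; nia.
have HRs : RR.+1 = (4 * k * k)%nat by rewrite /RR /k; nia.
have Hn : (RR * W).+2 = (32 * (k * k) * (k * k))%nat.
  have E : RR = (4 * k * k - 1)%nat by rewrite /RR; lia.
  rewrite E /W /k; nia.
exists (RR * W).+2; split; first by rewrite Hn /k; nia.
set K := INR k.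
have K1 : 1 <= K by rewrite /K /k S_INR; have := pos_INR N; lra.
have Hn' : INR (RR * W).+2 = 32 * (K * K) * (K * K).
  by rewrite Hn !INR_nat_e /K /=; ring.
set lam := 1 + / (4 * K).
have Hl1 : 1 < lam.
  have : 0 < / (4 * K) by apply: Rinv_0_lt_compat; lra.
  rewrite /lam; lra.
have Hl2 : lam <= 2.
  rewrite /lam; have : / (4 * K) <= 1; last lra.
  rewrite -Rinv_1; apply: Rinv_le_contravar; lra.
have Hlam : (lam - 1)^2 * INR W.-1 <= 1.
  have -> : W.-1 = (8 * k * k + 1)%nat by rewrite /W; lia.
  rewrite INR_nat_p !INR_nat_e -/K /lam /=.
  have -> : 1 + / (4 * K) - 1 = / (4 * K) by ring.
  have K0 : 0 < K by lra.
  apply: (Rmult_le_reg_r (16 * (K * K))); first nra.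
  field_simplify; [nra| lra].
exists (@eIc RR W), (aa RR W), (bb RR W), (XX RR W).
split; first exact: eI_simple.
split; first exact: eI_connected.
split; first exact: eI_deg3.
split.
  apply: (Rle_trans _ (INR RR)); first by apply: le_INR; apply/leP; exact: card_XX.
  rewrite Rmult_1_l Hn'.
  have HRK : INR RR <= 4 * (K * K).
    apply: (Rle_trans _ (INR RR.+1)); first by rewrite S_INR; lra.
    rewrite HRs !INR_nat_e -/K; have -> : INR 4 = 4 by simpl; ring. lra.
  apply: (Rle_trans _ _ _ HRK).
  have -> : 4 * (K * K) = sqrt ((4 * (K * K)) * (4 * (K * K))) by rewrite sqrt_square //; nra.
  apply: sqrt_le_1; nra.
move=> g Hg.
have Hm := main_graph HR HW Hl1 Hl2 Hlam Hg.
apply: hit_mono Hm.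
rewrite Hn'.
have K0 : 0 < K by lra.
have S1 : sqrt (sqrt (32 * (K * K) * (K * K))) <= 3 * K.
  have a1 : sqrt (32 * (K * K) * (K * K)) <= 9 * (K * K).
    rewrite -(sqrt_square (9 * (K * K))); last nra.
    apply: sqrt_le_1; nra.
  rewrite -(sqrt_square (3 * K)); last lra.
  apply: sqrt_le_1; [apply: sqrt_pos| nra| nra].
have S2 : exp (sqrt (sqrt (32 * (K * K) * (K * K))) / 100) <= 2 ^ k.
  have h2 := ln_lt_2.
  have -> : 2 ^ k = exp (K * ln 2).
    by rewrite /K -ln_pow ?exp_ln //; [apply: pow_lt|]; lra.
  apply: exp_le; nra.
have S3 : 2 ^ k <= lam ^ RR.+1.
  rewrite HRs -!multE pow_mult.
  apply: pow_incr; split; first lra.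
  have Hx : 0 <= / (4 * K) by apply: Rlt_le; apply: Rinv_0_lt_compat; lra.
  have := bern (4 * k)%nat Hx.
  rewrite /lam -multE mult_INR -/K.
  have -> : INR 4 = 4 by simpl; ring.
  have -> : 4 * K * / (4 * K) = 1 by field; lra.
  lra.
have S4 : 2 <= 2 ^ k.
  rewrite /k /=; have : 1 <= 2 ^ N by apply: pow_R1_Rle; lra.
  lra.
lra.
Qed.

Local Close Scope R_scope.

Theorem theorem1p2 :
  exists c C : R, (0 < c)%R /\ (0 < C)%R /\
  forall N : nat, exists n : nat, (N <= n)%N /\
    exists (e : rel 'I_n) (a b : 'I_n) (X : {set 'I_n}),
      simple_graph e /\ connected_graph e /\ max_degree_3 e /\
      (INR #|X| <= C * sqrt (INR n))%R /\
      forall g : 'I_n -> seq 'I_n, geodesic_choice e b g ->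
        expected_hit_ge e X g a b (c * exp (sqrt (sqrt (INR n)) / 100))%R.
Proof. exact: final_aux. Qed.
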